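(* Let $p$ be a prime and $s>1$, and let $F(x,y)$ be the formal group law of mod $p$ Morava $K$-theory $K(s)$. Then $$F(x,y)\equiv x+y-v_s\sum_{0<j<p}\frac1p\binom{p}{j}\bigl(x^{p^{s-1}}\bigr)^{j}\bigl(y^{p^{s-1}}\bigr)^{p-j}$$ modulo $x^{p^{2(s-1)}}$ (and likewise modulo $y^{p^{2(s-1)}}$).
   Context: The coefficient ring of $K(s)$ is $\mathbb{F}_p[v_s,v_s^{-1}]$, $|v_s|=2(p^s-1)$, and its formal group law is the mod $p$ reduction of the $p$-typical formal group law over $\mathbb{Z}_{(p)}[v_s]$ obtained from the universal $p$-typical formal group law $F_{BP}$ over $BP_*=\mathbb{Z}_{(p)}[v_1,v_2,\dots]$ (Hazewinkel generators) by setting $v_i=0$ for all $i\ne s$; its logarithm is $\sum_{k\ge0}v_s^{(p^{ks}-1)/(p^s-1)}x^{p^{ks}}/p^k$. Note $\frac1p\binom pj\in\mathbb{Z}$ for $0<j<p$. *)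

(* Defs.v *)
(* Bivariate formal power series over Q[v] are represented
   by their coefficient functions  nat -> nat -> {poly rat}  (coefficient of x^i y^j);
   the polynomial variable 'X plays the role of v_s. *)
From HB Require Import structures.
From mathcomp Require Import all_boot all_order all_algebra.
Set Implicit Arguments. Unset Strict Implicit. Unset Printing Implicit Defensive.
Import Order.TTheory GRing.Theory Num.Theory.
Local Open Scope ring_scope.

Definition ps2 := nat -> nat -> {poly rat}.

Definition ps2_one : ps2 := fun i j => ((i == 0%N) && (j == 0%N))%:R.
Definition ps2_X : ps2 := fun i j => ((i == 1%N) && (j == 0%N))%:R.
Definition ps2_Y : ps2 := fun i j => ((i == 0%N) && (j == 1%N))%:R.

Definition ps2_mul (A B : ps2) : ps2 := fun i j =>
  \sum_(a < i.+1) \sum_(b < j.+1) A a b * B (i - a)%N (j - b)%N.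

Definition ps2_exp (A : ps2) (n : nat) : ps2 := iter n (ps2_mul A) ps2_one.

Definition logcoef (p s k : nat) : {poly rat} :=
  'X ^+ ((p ^ (k * s) - 1) %/ (p ^ s - 1)) * ((p ^ k)%:R ^-1 : rat)%:P.

(* log(A) = sum_k logcoef k * A^(p^(ks)), for A without constant term;
   the terms with p^(ks) > i + j do not contribute to the (i,j) coefficient,
   so the sum is truncated at k <= i + j. *)
Definition log_of (p s : nat) (A : ps2) : ps2 := fun i j =>
  \sum_(k < (i + j).+1) logcoef p s k * ps2_exp A (p ^ (k * s)) i j.

(* F is the formal group law over Z_(p)[v_s] (viewed in Q[v_s]) with the
   given logarithm:  F(0,0) = 0 and  log(F(x,y)) = log x + log y. *)
Definition is_KsFGL (p s : nat) (F : ps2) : Prop :=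
  F 0%N 0%N = 0 /\
  forall i j, log_of p s F i j = log_of p s ps2_X i j + log_of p s ps2_Y i j.

Definition in_pZp (p : nat) (q : rat) : bool :=
  (p %| `|numq q|)%N && ~~ (p %| `|denq q|)%N.

(* a = b in Z_(p)[v]/(p) = F_p[v], i.e. a - b has all coefficients in p Z_(p). *)
Definition cong_mod_p (p : nat) (a b : {poly rat}) : Prop :=
  forall n, in_pZp p ((a - b)`_n).

Definition rhs (p s : nat) : ps2 := fun i j =>
  ps2_X i j + ps2_Y i j
  - 'X * \sum_(1 <= l < p)
          ((('C(p, l))%:R / p%:R : rat)%:P
           * ((i == p ^ (s - 1) * l)%N && (j == p ^ (s - 1) * (p - l))%N)%:R).

(* Main.v *)
Require Import Defs.
From HB Require Import structures.
From mathcomp Require Import all_boot all_order all_algebra.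
From mathcomp Require Import ring lra zify.
From Stdlib Require Import FunctionalExtensionality.
Set Implicit Arguments. Unset Strict Implicit. Unset Printing Implicit Defensive.
Import Order.TTheory GRing.Theory Num.Theory.
Local Open Scope ring_scope.

Definition inP (p m : nat) (q : rat) : Prop :=
  exists (a : int) (b : nat), ~~ (p %| b)%N /\ q * b%:R = (p ^ m)%:R * a%:~R.

Lemma ndvd1 p : prime p -> ~~ (p %| 1)%N.
Proof. by move=> hp; rewrite dvdn1; case: eqP hp => // ->. Qed.

Lemma inP0 p m : prime p -> inP p m 0.
Proof. by move=> hp; exists 0, 1%N; split; [exact: ndvd1|rewrite mul0r mulr0]. Qed.

Lemma inP_add p m x y : prime p -> inP p m x -> inP p m y -> inP p m (x + y).
Proof.
move=> hp [a [b [hb e1]]] [c [d [hd e2]]].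
exists (a * d%:Z + c * b%:Z), (b * d)%N; split.
  by rewrite Euclid_dvdM // negb_or hb hd.
rewrite natrM.
transitivity ((x * b%:R) * d%:R + (y * d%:R) * b%:R); first ring.
rewrite e1 e2 rmorphD !rmorphM /=. ring.
Qed.

Lemma inP_opp p m x : inP p m x -> inP p m (- x).
Proof.
move=> [a [b [hb e1]]]; exists (- a), b; split => //.
by rewrite mulNr e1 rmorphN /= mulrN.
Qed.

Lemma inP_mul p m n x y : prime p -> inP p m x -> inP p n y -> inP p (m + n) (x * y).
Proof.
move=> hp [a [b [hb e1]]] [c [d [hd e2]]].
exists (a * c), (b * d)%N; split.
  by rewrite Euclid_dvdM // negb_or hb hd.
rewrite natrM expnD natrM rmorphM /=.
transitivity ((x * b%:R) * (y * d%:R)); first ring.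
rewrite e1 e2; ring.
Qed.

Lemma inP_weak p m n x : (n <= m)%N -> inP p m x -> inP p n x.
Proof.
move=> hnm [a [b [hb e1]]]; exists (a * (p ^ (m - n))%:R), b; split => //.
rewrite e1 -(subnKC hnm) expnD natrM rmorphM /= subnKC //.
rewrite [X in _ = _ * (_ * X)](_ : _ = (p ^ (m - n))%:R :> rat); first ring.
by rewrite pmulrn intz.
Qed.

Lemma inP_nat p m k : prime p -> (p ^ m %| k)%N -> inP p m k%:R.
Proof.
move=> hp /dvdnP [c ->]; exists c%:Z, 1%N; split; first exact: ndvd1.
by rewrite mulr1 natrM mulrC -pmulrn.
Qed.

Lemma inP_divp p m k x : prime p -> inP p (m + k) x -> inP p m (x / (p ^ k)%:R).
Proof.
move=> hp [a [b [hb e1]]]; exists a, b; split => //.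
have hp0 : (p ^ k)%:R != 0 :> rat.
  rewrite pnatr_eq0 expn_eq0; apply/nandP; left; by rewrite -lt0n prime_gt0.
rewrite mulrAC e1 expnD natrM; by field.
Qed.

Lemma inP_in_pZp p x : prime p -> inP p 1 x -> in_pZp p x.
Proof.
move=> hp [a [b [hb e1]]].
have hb0 : (0 < b)%N by case: b hb {e1} => //; rewrite dvdn0.
have key : (`|numq x| * b = p * `|a| * `|denq x|)%N.
  have E : (numq x)%:~R * b%:R = (p%:R * a%:~R) * (denq x)%:~R :> rat.
    by rewrite numqE mulrAC e1 expn1.
  have Ei : numq x * b%:Z = p%:Z * a * denq x.
    apply: (@intr_inj rat); rewrite !rmorphM /= -E; congr (_ * _).
  by have := congr1 absz Ei; rewrite !abszM /=.
apply/andP; split.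
  have : (p %| `|numq x| * b)%N by rewrite key -mulnA dvdn_mulr.
  by rewrite Euclid_dvdM // (negbTE hb) orbF.
apply/negP => hpd; apply: (negP hb).
have : (`|denq x| %| `|numq x| * b)%N by rewrite key dvdn_mull.
rewrite Gauss_dvdr; last by rewrite coprime_sym coprime_num_den.
by apply: dvdn_trans.
Qed.

Definition pin (p m : nat) (a : {poly rat}) : Prop := forall n, inP p m a`_n.

Lemma pin0 p m : prime p -> pin p m 0.
Proof. by move=> hp n; rewrite coef0; exact: inP0. Qed.

Lemma pin_add p m a b : prime p -> pin p m a -> pin p m b -> pin p m (a + b).
Proof. by move=> hp ha hb n; rewrite coefD; apply: inP_add. Qed.

Lemma pin_opp p m a : pin p m a -> pin p m (- a).
Proof. by move=> ha n; rewrite coefN; apply: inP_opp. Qed.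

Lemma pin_sub p m a b : prime p -> pin p m a -> pin p m b -> pin p m (a - b).
Proof. by move=> hp ha hb; apply: pin_add => //; apply: pin_opp. Qed.

Lemma pin_weak p m n a : (n <= m)%N -> pin p m a -> pin p n a.
Proof. by move=> hnm ha k; apply: inP_weak (ha k). Qed.

Lemma pin_sum p m I (r : seq I) (P : pred I) (F : I -> {poly rat}) :
  prime p -> (forall i, P i -> pin p m (F i)) -> pin p m (\sum_(i <- r | P i) F i).
Proof.
move=> hp hF; apply: (big_ind (pin p m)); [exact: pin0|by move=> x y; apply: pin_add|exact: hF].
Qed.

Lemma pin_mul p m n a b : prime p -> pin p m a -> pin p n b -> pin p (m + n) (a * b).
Proof.
move=> hp ha hb k; rewrite coefM.
have : pin p (m + n) (\sum_(j < k.+1) (a`_j * b`_(k - j))%:P).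
  apply: pin_sum => // j _ l; rewrite coefC; case: (l == 0)%N; first exact: inP_mul.
  exact: inP0.
by move=> /(_ 0%N); rewrite coef_sum; under eq_bigr do rewrite coefC /=.
Qed.

Lemma pin_nat p m k : prime p -> (p ^ m %| k)%N -> pin p m k%:R.
Proof.
move=> hp hk n; rewrite -[k%:R]/(1 *+ k) coefMn coef1.
case: (n == 0)%N; first by rewrite mulr1n; apply: inP_nat.
by rewrite mul0rn; apply: inP0.
Qed.

Lemma pin_C p m c : prime p -> inP p m c -> pin p m c%:P.
Proof. by move=> hp hc n; rewrite coefC; case: (n == 0)%N => //; exact: inP0. Qed.

Lemma pin_X p : prime p -> pin p 0 'X.
Proof.
move=> hp n; rewrite coefX; case: (n == 1)%N; first by by apply: (@inP_nat p 0 1 hp); rewrite expn0 dvd1n.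
exact: inP0.
Qed.

Lemma pin_exp p m e a : prime p -> pin p m a -> pin p (m * e) (a ^+ e).
Proof.
move=> hp ha; elim: e => [|e IH]; first by rewrite muln0 expr0; by apply: (@pin_nat p 0 1 hp); rewrite expn0 dvd1n.
by rewrite exprS mulnS; apply: pin_mul.
Qed.

Lemma pin_divp p m k a : prime p -> pin p (m + k) a -> pin p m ((p ^ k)%:R^-1%:P * a).
Proof. by move=> hp ha n; rewrite coefCM mulrC; apply: inP_divp. Qed.

Lemma pin_logcoef p s m k a : prime p -> pin p (m + k) a -> pin p m (logcoef p s k * a).
Proof.
move=> hp ha; rewrite /logcoef -mulrA.
have hX : pin p 0 ('X ^+ ((p ^ (k * s) - 1) %/ (p ^ s - 1))%N).
  by rewrite -(mul0n ((p ^ (k * s) - 1) %/ (p ^ s - 1))%N); apply: pin_exp => //; apply: pin_X.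
rewrite -[m]add0n; apply: pin_mul => //.
exact: pin_divp.
Qed.

Notation P3 := {poly {poly {poly rat}}}.

Definition good (p N m : nat) (A : P3) : Prop :=
  forall i j, (i < N)%N -> pin p m (A`_i`_j).

Lemma coef2M (A B : P3) i j :
  (A * B)`_i`_j = \sum_(a < i.+1) \sum_(b < j.+1) A`_a`_b * B`_(i - a)`_(j - b).
Proof. by rewrite coefM coef_sum; apply: eq_bigr => a _; rewrite coefM. Qed.

Section G.
Variables (p N : nat) (hp : prime p).

Lemma good0 m : good p N m 0.
Proof. by move=> i j _; rewrite !coef0; exact: pin0. Qed.

Lemma good_add m A B : good p N m A -> good p N m B -> good p N m (A + B).
Proof. by move=> hA hB i j hi; rewrite !coefD; apply: pin_add => //; [apply: hA|apply: hB]. Qed.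

Lemma good_opp m A : good p N m A -> good p N m (- A).
Proof. by move=> hA i j hi; rewrite !coefN; apply: pin_opp; apply: hA. Qed.

Lemma good_sub m A B : good p N m A -> good p N m B -> good p N m (A - B).
Proof. by move=> hA hB; apply: good_add => //; apply: good_opp. Qed.

Lemma good_weak m n A : (n <= m)%N -> good p N m A -> good p N n A.
Proof. by move=> hnm hA i j hi; apply: pin_weak hnm (hA i j hi). Qed.

Lemma good_sum m I (r : seq I) (P : pred I) (F : I -> P3) :
  (forall i, P i -> good p N m (F i)) -> good p N m (\sum_(i <- r | P i) F i).
Proof.
move=> hF; apply: (big_ind (good p N m)); [exact: good0|by move=> x y; apply: good_add|exact: hF].
Qed.

Lemma good_mul m n A B : good p N m A -> good p N n B -> good p N (m + n) (A * B).
Proof.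
move=> hA hB i j hi; rewrite coef2M; apply: pin_sum => // a _; apply: pin_sum => // b _.
apply: pin_mul => //.
  by apply: hA; apply: leq_ltn_trans hi; rewrite -ltnS.
by apply: hB; apply: leq_ltn_trans hi; rewrite leq_subr.
Qed.

Lemma good1 : good p N 0 1.
Proof.
move=> i j _; rewrite coef1; case: (i == 0)%N; last by rewrite coef0; exact: pin0.
rewrite coef1; apply: (@pin_nat p 0 (j == 0)%N hp); by rewrite expn0 dvd1n.
Qed.

Lemma good_exp m e A : good p N m A -> good p N (m * e) (A ^+ e).
Proof.
move=> hA; elim: e => [|e IH]; first by rewrite muln0 expr0; exact: good1.
by rewrite exprS mulnS; apply: good_mul.
Qed.

Lemma good_muln m e k A : (p ^ e %| k)%N -> good p N m A -> good p N (m + e) (A *+ k).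
Proof.
move=> hk hA i j hi; rewrite !coefMn -mulr_natr; apply: pin_mul => //.
  exact: hA.
exact: pin_nat.
Qed.

Lemma good_muln0 m k A : good p N m A -> good p N m (A *+ k).
Proof. by move=> hA; rewrite -[m]addn0; apply: good_muln => //; rewrite expn0 dvd1n. Qed.

Lemma good_C m c : pin p m c -> good p N m c%:P%:P.
Proof.
move=> hc i j _; rewrite coefC; case: (i == 0)%N; last by rewrite coef0; exact: pin0.
rewrite coefC; case: (j == 0)%N => //; exact: pin0.
Qed.

Lemma good_Cmul m c A : (forall a, pin p m a -> pin p 0 (c * a)) -> good p N m A -> good p N 0 (c%:P%:P * A).
Proof. by move=> hc hA i j hi; rewrite !coefCM; apply: hc; apply: hA. Qed.

Lemma good_logcoef s m k A : good p N (m + k) A -> good p N m ((logcoef p s k)%:P%:P * A).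
Proof. by move=> hA i j hi; rewrite !coefCM; apply: pin_logcoef => //; apply: hA. Qed.

Lemma good_x : good p N 0 'X.
Proof.
move=> i j _; rewrite coefX; case: (i == 1)%N; last by rewrite coef0; exact: pin0.
rewrite coef1; apply: (@pin_nat p 0 (j == 0)%N hp); by rewrite expn0 dvd1n.
Qed.

Lemma good_y : good p N 0 ('X%:P).
Proof.
move=> i j _; rewrite coefC; case: (i == 0)%N; last by rewrite coef0; exact: pin0.
rewrite coefX; apply: (@pin_nat p 0 (j == 1)%N hp); by rewrite expn0 dvd1n.
Qed.

Lemma good_v : good p N 0 ('X%:P%:P).
Proof. by apply: good_C; apply: pin_X. Qed.

Lemma good_xN m B : good p N m ('X^N * B).
Proof. by move=> i j hi; rewrite coefXnM hi coef0; exact: pin0. Qed.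

End G.

Definition lowvan (d : nat) (A : P3) : Prop := forall i j, (i + j < d)%N -> A`_i`_j = 0.

Lemma lowvan_add d A B : lowvan d A -> lowvan d B -> lowvan d (A + B).
Proof. by move=> hA hB i j h; rewrite !coefD hA // hB // addr0. Qed.

Lemma lowvan_sub d A B : lowvan d A -> lowvan d B -> lowvan d (A - B).
Proof. by move=> hA hB i j h; rewrite !coefB hA // hB // subr0. Qed.

Lemma lowvan_weak d e A : (e <= d)%N -> lowvan d A -> lowvan e A.
Proof. by move=> hed hA i j h; apply: hA; apply: leq_trans hed. Qed.

Lemma lowvan_sum d I (r : seq I) (P : pred I) (F : I -> P3) :
  (forall i, P i -> lowvan d (F i)) -> lowvan d (\sum_(i <- r | P i) F i).
Proof.
move=> hF; apply: (big_ind (lowvan d)); [by move=> i j _; rewrite !coef0|by move=> x y; apply: lowvan_add|exact: hF].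
Qed.

Lemma lowvan_mul d e A B : lowvan d A -> lowvan e B -> lowvan (d + e) (A * B).
Proof.
move=> hA hB i j h; rewrite coef2M; apply: big1 => a _; apply: big1 => b _.
have ha : (a <= i)%N by rewrite -ltnS. have hb : (b <= j)%N by rewrite -ltnS.
case: (ltnP (a + b) d) => hab; first by rewrite hA // mul0r.
rewrite hB ?mulr0 //; lia.
Qed.

Lemma lowvan_exp d e A : lowvan d A -> lowvan (d * e) (A ^+ e).
Proof.
move=> hA; elim: e => [|e IH]; first by rewrite muln0 => i j.
by rewrite exprS mulnS; apply: lowvan_mul.
Qed.

Lemma binval p e K m : prime p -> (0 < m)%N -> (m < p ^ e.+1)%N ->
  (p ^ (K - e) %| 'C(p ^ K, m))%N.
Proof.
move=> hp hm hme.
have [->|hC] := eqVneq 'C(p ^ K, m) 0%N; first exact: dvdn0.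
have hC0 : (0 < 'C(p ^ K, m))%N by rewrite lt0n.
have hdiv : (p ^ K %| m * 'C(p ^ K, m))%N.
  case: m hm {hme hC hC0} => // m _.
  by rewrite -mul_bin_diag dvdn_mulr.
have hl : (logn p m <= e)%N.
  have : (p ^ logn p m <= m)%N by apply: dvdn_leq => //; rewrite pfactor_dvdn.
  move=> h; have := leq_ltn_trans h hme; rewrite ltn_exp2l ?prime_gt1 //.
move: hdiv; rewrite pfactor_dvdn ?muln_gt0 ?hm // lognM // => hK.
rewrite pfactor_dvdn //; lia.
Qed.

Lemma expDsub (R : comPzRingType) (a c : R) n :
  (a + c) ^+ n - a ^+ n = \sum_(i < n) (a ^+ (n - i.+1) * c ^+ i.+1) *+ 'C(n, i.+1).
Proof. by rewrite exprDn big_ord_recl /= subn0 expr0 mulr1 bin0 mulr1n addrC addKr. Qed.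

Lemma frob_gen (R : comPzRingType) (a b : R) n :
  (a + b) ^+ n.+1 - a ^+ n.+1 - b ^+ n.+1 =
  \sum_(i < n) (a ^+ (n - i) * b ^+ i.+1) *+ 'C(n.+1, i.+1).
Proof.
rewrite expDsub big_ord_recr /= subnn expr0 mul1r binn mulr1n addrK.
by apply: eq_bigr => i _; rewrite subSS.
Qed.

Section PP.
Variables (p N : nat) (hp : prime p).

Lemma good_pow r e A c : (1 <= r)%N -> good p N 0 A -> good p N r c ->
  good p N (r + e) ((A + c) ^+ (p ^ e) - A ^+ (p ^ e)).
Proof.
move=> hr hA hc; elim: e => [|e IH]; first by rewrite addn0 !expn0 !expr1 addrC addKr.
set B := _ - _ in IH.
have -> : (A + c) ^+ (p ^ e.+1) = (A ^+ (p ^ e) + B) ^+ p.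
  by rewrite /B [A ^+ _ + _]addrC subrK expnSr exprM.
rewrite expnSr exprM expDsub; apply: (good_sum hp) => i _.
have hAe : good p N 0 (A ^+ (p ^ e)) by rewrite -(mul0n (p ^ e)%N); apply: (good_exp hp).
have hAe' : good p N 0 ((A ^+ (p ^ e)) ^+ (p - i.+1)) by rewrite -(mul0n (p - i.+1)%N); apply: (good_exp hp).
have hBi : good p N ((r + e) * i.+1) (B ^+ i.+1) by apply: (good_exp hp).
have hi := ltn_ord i.
case: (ltnP i.+1 p) => hip.
  apply: (@good_weak p N (0 + (r + e) * i.+1 + 1)); first by nia.
  apply: (good_muln hp) => //; first by rewrite expn1; apply: (@binval p 0 1 i.+1 hp) => //; rewrite expn1.
  by apply: (good_mul hp).
apply: (@good_weak p N (0 + (r + e) * i.+1)).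
  have hp2 := prime_gt1 hp. have -> : i.+1 = p by lia. nia.
by apply: (good_muln0 hp); apply: (good_mul hp).
Qed.

Lemma frob a b : good p N 0 a -> good p N 0 b -> good p N 1 ((a + b) ^+ p - a ^+ p - b ^+ p).
Proof.
move=> ha hb; have hp0 := prime_gt0 hp.
have E := frob_gen a b p.-1; rewrite prednK // in E; rewrite E; apply: (good_sum hp) => i _.
rewrite -[1%N]add0n; apply: (good_muln hp).
  rewrite -{1}(expn1 p); apply: (@binval p 0 1 i.+1 hp) => //; rewrite expn1.
  by have := ltn_ord i; lia.
apply: (@good_mul p N hp 0 0).
  by rewrite -(mul0n (p.-1 - i)%N); apply: (good_exp hp).
by rewrite -(mul0n i.+1); apply: (good_exp hp).
Qed.

Lemma frob_iter a b e : good p N 0 a -> good p N 0 b ->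
  good p N 1 ((a + b) ^+ (p ^ e) - a ^+ (p ^ e) - b ^+ (p ^ e)).
Proof.
move=> ha hb; elim: e => [|e IH].
  rewrite expn0 !expr1 (_ : a + b - a - b = 0); [exact: (good0 hp)|ring].
have hae : good p N 0 (a ^+ (p ^ e)) by rewrite -(mul0n (p ^ e)%N); apply: (good_exp hp).
have hbe : good p N 0 (b ^+ (p ^ e)) by rewrite -(mul0n (p ^ e)%N); apply: (good_exp hp).
set E := _ - _ - _ in IH.
have -> : (a + b) ^+ (p ^ e.+1) = (a ^+ (p ^ e) + b ^+ (p ^ e) + E) ^+ p.
  by rewrite /E expnSr exprM; congr (_ ^+ _); ring.
rewrite expnSr !exprM.
set u := a ^+ (p ^ e) + b ^+ (p ^ e).
have -> : (u + E) ^+ p - (a ^+ (p ^ e)) ^+ p - (b ^+ (p ^ e)) ^+ p =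
  ((u + E) ^+ p - u ^+ p) + (u ^+ p - (a ^+ (p ^ e)) ^+ p - (b ^+ (p ^ e)) ^+ p) by ring.
apply: (good_add hp); last exact: frob.
apply: (@good_weak p N (1 + 1)) => //.
have hu : good p N 0 u by apply: (good_add hp).
have := @good_pow 1 1 u E (leqnn 1) hu IH; by rewrite expn1.
Qed.
End PP.

Definition xx : P3 := 'X.
Definition yy : P3 := ('X)%:P.
Definition vv : P3 := ('X)%:P%:P.
Definition cl (p l : nat) : rat := ('C(p, l))%:R / p%:R.
Definition Cp (p s : nat) : P3 := \sum_(1 <= l < p)
  (cl p l)%:P%:P%:P * xx ^+ (p ^ (s - 1) * l) * yy ^+ (p ^ (s - 1) * (p - l)).
Definition Cp' (p s : nat) : P3 := \sum_(1 <= l < p)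
  (cl p l)%:P%:P%:P * xx ^+ (p ^ (s - 1) * (l - 1)) * yy ^+ (p ^ (s - 1) * (p - l)).
Definition Gp (p s : nat) : P3 := xx + yy - vv * Cp p s.

Lemma coef_mono (c : {poly rat}) a b i j :
  (c%:P%:P * xx ^+ a * yy ^+ b)`_i`_j = c * ((i == a) && (j == b))%:R.
Proof.
rewrite /xx /yy -mulrA [_ * _ ^+ b]mulrC mulrA -rmorphXn -rmorphM /= coefMXn.
case: (ltnP i a) => hia.
  by rewrite coef0 (_ : (i == a) = false) ?mulr0 //; apply/negbTE; rewrite neq_ltn hia.
rewrite coefC; case: eqP => hia'.
  have -> : i = a by lia.
  by rewrite eqxx /= coefCM coefXn.
rewrite coef0 (_ : (i == a) = false) ?mulr0 //; apply/negbTE/eqP; lia.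
Qed.

Lemma coef_Gp p s i j : (Gp p s)`_i`_j = rhs p s i j.
Proof.
rewrite /Gp /rhs !coefB !coefD.
congr (_ + _ - _).
- rewrite /xx coefX /ps2_X; case: (i == 1)%N; last by rewrite coef0.
  by rewrite coef1 /=.
- rewrite /yy coefC /ps2_Y; case: (i == 0)%N; last by rewrite coef0.
  by rewrite coefX.
rewrite /Cp !mulr_sumr !coef_sum; apply: eq_bigr => l _.
rewrite /vv !mulrA -!rmorphM /= coef_mono; by [].
Qed.

Section K.
Variables (p s : nat) (hp : prime p) (hs : (1 < s)%N).
Local Notation q := (p ^ (s - 1))%N.
Local Notation N := (p ^ (2 * (s - 1)))%N.

Lemma NE : N = (q * q)%N.
Proof. by rewrite -expnD; congr expn; lia. Qed.

Lemma Cp_fact : Cp p s = xx ^+ q * Cp' p s.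
Proof.
rewrite /Cp /Cp' mulr_sumr; apply: eq_big_nat => l /andP[hl _].
have -> : (q * l = q + q * (l - 1))%N by rewrite -{2}(muln1 q) -mulnDr; congr (_ * _); lia.
rewrite exprD; ring.
Qed.

Lemma inP_cl l : (0 < l < p)%N -> inP p 0 (cl p l).
Proof.
move=> /andP[h1 h2]; rewrite /cl -{2}(expn1 p); apply: (@inP_divp p 0 1) => //.
apply: inP_nat => //; rewrite add0n -{2}(expn1 p); apply: (@binval p 0 1 l hp) => //.
Qed.

Lemma good_Cp' : good p N 0 (Cp' p s).
Proof.
rewrite /Cp' big_nat_cond; apply: (good_sum hp) => l /andP[hl _].
apply: (@good_mul p N hp 0 0); last by rewrite -(mul0n (q * (p - l))%N); apply: (good_exp hp); exact: (good_y hp).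
apply: (@good_mul p N hp 0 0); last by rewrite -(mul0n (q * (l - 1))%N); apply: (good_exp hp); exact: (good_x hp).
by apply: (good_C hp); apply: (pin_C hp); apply: inP_cl.
Qed.

Lemma cl_nat l : (cl p l)%:P%:P%:P * p%:R = 'C(p, l)%:R :> P3.
Proof.
have hp0 : p%:R != 0 :> rat by rewrite pnatr_eq0 -lt0n prime_gt0.
rewrite -[p%:R](rmorph_nat ((@polyC _) \o (@polyC _) \o (@polyC rat))) /=.
rewrite -!rmorphM /= /cl mulfVK //.
by rewrite -[RHS](rmorph_nat ((@polyC _) \o (@polyC _) \o (@polyC rat))).
Qed.

Lemma T1 : good p N 2 ((xx + yy) ^+ (p ^ s) - xx ^+ (p ^ s) - yy ^+ (p ^ s) - Cp p s *+ p).
Proof.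
have hps : (p ^ s = q * p)%N by rewrite -expnSr; congr expn; lia.
have hxg : good p N 0 xx := good_x hp.
have hyg : good p N 0 yy := good_y hp.
have hxq : good p N 0 (xx ^+ q) by rewrite -(mul0n q); apply: (good_exp hp).
have hyq : good p N 0 (yy ^+ q) by rewrite -(mul0n q); apply: (good_exp hp).
have hE : good p N 1 ((xx + yy) ^+ q - xx ^+ q - yy ^+ q) := frob_iter hp (s - 1) hxg hyg.
set E := (xx + yy) ^+ q - xx ^+ q - yy ^+ q in hE.
set u := yy ^+ q + xx ^+ q.
have hu : good p N 0 u by apply: (good_add hp).
have key : u ^+ p - (yy ^+ q) ^+ p - (xx ^+ q) ^+ p = Cp p s *+ p.
  have := frob_gen (yy ^+ q) (xx ^+ q) p.-1; rewrite prednK ?prime_gt0 // => ->.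
  rewrite /Cp -sumrMnl big_add1 big_mkord; apply: eq_bigr => i _.
  have hi := ltn_ord i.
  rewrite -!exprM; have -> : (p - i.+1 = p.-1 - i)%N by lia.
  by rewrite -mulr_natl -[RHS]mulr_natl -cl_nat; ring.
rewrite hps !exprM.
have -> : (xx + yy) ^+ q = u + E by rewrite /E /u; ring.
have -> : (u + E) ^+ p - (xx ^+ q) ^+ p - (yy ^+ q) ^+ p - Cp p s *+ p =
   ((u + E) ^+ p - u ^+ p) + (u ^+ p - (yy ^+ q) ^+ p - (xx ^+ q) ^+ p - Cp p s *+ p) by ring.
rewrite key subrr addr0.
by have := good_pow hp 1 (leqnn 1) hu hE; rewrite expn1.
Qed.


Lemma good_Cp : good p N 0 (Cp p s).
Proof.
rewrite Cp_fact; apply: (@good_mul p N hp 0 0); last exact: good_Cp'.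
by rewrite -(mul0n q); apply: (good_exp hp); exact: (good_x hp).
Qed.

Lemma good_S e : good p N 0 ((xx + yy) ^+ e).
Proof.
rewrite -(mul0n e); apply: (good_exp hp); apply: (good_add hp); [exact: (good_x hp)|exact: (good_y hp)].
Qed.

Lemma GmS k : (0 < k)%N -> good p N k.+1 (Gp p s ^+ (p ^ (k * s)) - (xx + yy) ^+ (p ^ (k * s))).
Proof.
move=> hk.
rewrite /Gp expDsub; apply: (good_sum hp) => i _.
have hS := good_S (p ^ (k * s) - i.+1).
case: (ltnP i.+1 q) => hm.
  have hW : good p N 0 ((- (vv * Cp p s)) ^+ i.+1).
    rewrite -(mul0n i.+1); apply: (good_exp hp); apply: good_opp.
    by apply: (@good_mul p N hp 0 0); [exact: (good_v hp)|exact: good_Cp].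
  apply: (@good_weak p N (0 + (k * s - (s - 2)))); first by nia.
  apply: (good_muln hp); last by apply: (@good_mul p N hp 0 0).
  apply: (@binval p (s - 2) (k * s) i.+1 hp) => //.
  by have -> : (s - 2).+1 = (s - 1)%N by lia.
have hW : (- (vv * Cp p s)) ^+ i.+1 = xx ^+ N * ((- (vv * Cp' p s)) ^+ i.+1 * xx ^+ (q * i.+1 - N)).
  rewrite Cp_fact.
  have -> : - (vv * (xx ^+ q * Cp' p s)) = xx ^+ q * (- (vv * Cp' p s)) by ring.
  rewrite exprMn -exprM.
  have -> : (q * i.+1 = N + (q * i.+1 - N))%N.
    by rewrite NE subnKC // leq_mul2l hm orbT.
  rewrite exprD addKn; ring.
by rewrite hW mulrCA -mulrnAr; apply: (good_xN hp).
Qed.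

Lemma SmY k : (1 < k)%N -> good p N k.+1 ((xx + yy) ^+ (p ^ (k * s)) - yy ^+ (p ^ (k * s))).
Proof.
move=> hk; rewrite [xx + yy]addrC expDsub; apply: (good_sum hp) => i _.
case: (ltnP i.+1 N) => hm.
  apply: (@good_weak p N (0 + (k * s - (2 * s - 3)))); first by nia.
  apply: (good_muln hp).
    apply: (@binval p (2 * s - 3) (k * s) i.+1 hp) => //.
    by have -> : (2 * s - 3).+1 = (2 * (s - 1))%N by lia.
  apply: (@good_mul p N hp 0 0).
    by rewrite -(mul0n (p ^ (k * s) - i.+1))%N; apply: (good_exp hp); exact: (good_y hp).
  by rewrite -(mul0n i.+1); apply: (good_exp hp); exact: (good_x hp).
have -> : xx ^+ i.+1 = xx ^+ N * xx ^+ (i.+1 - N) by rewrite -exprD subnKC.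
by rewrite mulrCA -mulrnAr; apply: (good_xN hp).
Qed.

Lemma xM k m : (1 < k)%N -> good p N m (xx ^+ (p ^ (k * s))).
Proof.
move=> hk; have hle : (N <= p ^ (k * s))%N by apply: leq_pexp2l; [exact: prime_gt0|nia].
by rewrite -(subnKC hle) exprD; apply: (good_xN hp).
Qed.

End K.

Definition T (n : nat) (A : ps2) : P3 := \poly_(i < n) \poly_(j < n) A i j.

Lemma coefT n A i j : (T n A)`_i`_j = if ((i < n) && (j < n))%N then A i j else 0.
Proof.
rewrite /T coef_poly; case: (ltnP i n) => /= hi; last by rewrite coef0.
by rewrite coef_poly.
Qed.

Lemma mul_T n A B (Q : P3) i j : (i < n)%N -> (j < n)%N ->
  (forall a b, (a <= i)%N -> (b <= j)%N -> B a b = Q`_a`_b) ->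
  ps2_mul A B i j = (T n A * Q)`_i`_j.
Proof.
move=> hi hj hB; rewrite coef2M /ps2_mul; apply: eq_bigr => a _; apply: eq_bigr => b _.
have ha : (a <= i)%N by rewrite -ltnS. have hb : (b <= j)%N by rewrite -ltnS.
rewrite coefT (leq_ltn_trans ha hi) (leq_ltn_trans hb hj) /= hB //; exact: leq_subr.
Qed.

Lemma exp_T n A m i j : (i < n)%N -> (j < n)%N -> ps2_exp A m i j = ((T n A) ^+ m)`_i`_j.
Proof.
elim: m i j => [|m IH] i j hi hj.
  rewrite expr0 /ps2_exp /= /ps2_one coef1; case: (i == 0)%N => /=; last by rewrite coef0.
  by rewrite coef1.
rewrite exprS /ps2_exp iterS -/(ps2_exp A m); apply: mul_T => // a b ha hb.
by apply: IH; [exact: leq_ltn_trans hi|exact: leq_ltn_trans hj].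
Qed.

Lemma T_X n : (1 < n)%N -> T n ps2_X = xx.
Proof.
move=> hn; apply/polyP => i; apply/polyP => j; rewrite coefT /xx coefX /ps2_X.
case: (ltnP i n) => hi /=; last first.
  by rewrite (_ : (i == 1)%N = false) ?coef0 //; apply/negbTE/eqP; lia.
case: (ltnP j n) => hj /=; last first.
  by case: (i == 1)%N; rewrite ?coef1 ?coef0 // (_ : (j == 0)%N = false) //; apply/negbTE/eqP; lia.
by case: (i == 1)%N; rewrite ?coef1 ?coef0.
Qed.

Lemma T_Y n : (1 < n)%N -> T n ps2_Y = yy.
Proof.
move=> hn; apply/polyP => i; apply/polyP => j; rewrite coefT /yy coefC /ps2_Y.
case: (ltnP i n) => hi /=; last first.
  by rewrite (_ : (i == 0)%N = false) ?coef0 //; apply/negbTE/eqP; lia.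
case: (ltnP j n) => hj /=; last first.
  by case: (i == 0)%N; rewrite ?coefX ?coef0 // (_ : (j == 1)%N = false) //; apply/negbTE/eqP; lia.
by case: (i == 0)%N; rewrite ?coefX ?coef0.
Qed.

Lemma pow_lowvan t (A B : P3) M : lowvan 1 A -> lowvan 1 B -> lowvan t (A - B) -> (1 < M)%N ->
  lowvan t.+1 (A ^+ M - B ^+ M).
Proof.
move=> hA hB hAB hM; rewrite subrXX.
apply: (@lowvan_weak (t + M.-1)); first by lia.
apply: lowvan_mul => //; apply: lowvan_sum => i _.
apply: (@lowvan_weak (1 * (M.-1 - i) + 1 * i)); first by have := ltn_ord i; lia.
by apply: lowvan_mul; apply: lowvan_exp.
Qed.

Lemma logcoef0 p s : logcoef p s 0 = 1.
Proof. by rewrite /logcoef mul0n expn0 subnn div0n expr0 mul1r invr1 polyC1. Qed.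

Lemma log_T p s n F i j : (i < n)%N -> (j < n)%N ->
  log_of p s F i j = \sum_(k < (i + j).+1) logcoef p s k * ((T n F) ^+ (p ^ (k * s)))`_i`_j.
Proof. by move=> hi hj; apply: eq_bigr => k _; rewrite (exp_T _ _ hi hj). Qed.

Lemma coefCM2 (c : {poly rat}) (Z : P3) i j : (c%:P%:P * Z)`_i`_j = c * Z`_i`_j.
Proof. by rewrite !coefCM. Qed.

Lemma lowvan1_00 (A : P3) : A`_0`_0 = 0 -> lowvan 1 A.
Proof. by move=> h i j; case: i => // ; case: j. Qed.

Section M.
Variables (p s : nat) (hp : prime p) (hs : (1 < s)%N).
Local Notation q := (p ^ (s - 1))%N.
Local Notation N := (p ^ (2 * (s - 1)))%N.

Lemma Gp00 : (Gp p s)`_0`_0 = 0.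
Proof.
rewrite /Gp !coefB !coefD /xx /yy coefX coefC /= /vv coefCM2 Cp_fact // /xx coefXnM.
rewrite expn_gt0 prime_gt0 // coef0 mulr0 coefC /= coefX /=. by rewrite add0r subr0.
Qed.

Lemma rhs00 : rhs p s 0 0 = 0.
Proof. by rewrite -coef_Gp Gp00. Qed.

Lemma good_Gp : good p N 0 (Gp p s).
Proof.
apply: (good_sub hp); first by apply: (good_add hp); [exact: (good_x hp)|exact: (good_y hp)].
by apply: (@good_mul p N hp 0 0); [exact: (good_v hp)|exact: good_Cp].
Qed.

Lemma c1_eq (Z : P3) : (logcoef p s 1)%:P%:P * (Z *+ p) = vv * Z.
Proof.
have hp0 : p%:R != 0 :> rat by rewrite pnatr_eq0 -lt0n prime_gt0.
rewrite /logcoef.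
have -> : ((p ^ (1 * s) - 1) %/ (p ^ s - 1) = 1)%N.
  rewrite mul1n divnn subn_gt0 -{1}(expn0 p) ltn_exp2l ?prime_gt1 //; lia.
rewrite expr1 (_ : (Z *+ p) = (p%:R : rat)%:P%:P%:P * Z); last first.
  by rewrite !rmorph_nat mulr_natl.
rewrite mulrA /vv; congr (_ * _).
rewrite -!rmorphM /= -mulrA -rmorphM /= expn1 mulVf //.
by rewrite mulr1.
Qed.

Lemma Theta t : good p N 1 (\sum_(k < t.+1) (logcoef p s k.+1)%:P%:P *
   (Gp p s ^+ (p ^ (k.+1 * s)) - xx ^+ (p ^ (k.+1 * s)) - yy ^+ (p ^ (k.+1 * s))) - vv * Cp p s).
Proof.
rewrite big_ord_recl /= -addrAC; apply: (good_add hp).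
  rewrite -c1_eq -mulrBr; apply: (@good_logcoef p N hp s 1 1).
  have -> : (Gp p s ^+ (p ^ (1 * s)) - xx ^+ (p ^ (1 * s)) - yy ^+ (p ^ (1 * s)) - Cp p s *+ p) =
    (Gp p s ^+ (p ^ (1 * s)) - (xx + yy) ^+ (p ^ (1 * s))) +
    ((xx + yy) ^+ (p ^ s) - xx ^+ (p ^ s) - yy ^+ (p ^ s) - Cp p s *+ p) by rewrite mul1n; ring.
  apply: (good_add hp); first exact: GmS.
  exact: T1.
apply: (good_sum hp) => k _; apply: (@good_logcoef p N hp s 1 k.+2).
have -> : (Gp p s ^+ (p ^ (k.+2 * s)) - xx ^+ (p ^ (k.+2 * s)) - yy ^+ (p ^ (k.+2 * s))) =
  (Gp p s ^+ (p ^ (k.+2 * s)) - (xx + yy) ^+ (p ^ (k.+2 * s))) +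
  ((xx + yy) ^+ (p ^ (k.+2 * s)) - yy ^+ (p ^ (k.+2 * s))) - xx ^+ (p ^ (k.+2 * s)) by ring.
rewrite add1n; apply: (good_sub hp); last exact: xM.
by apply: (good_add hp); [exact: GmS|exact: SmY].
Qed.

End M.

Section Main.
Variables (p s : nat) (hp : prime p) (hs : (1 < s)%N) (F : ps2) (hF : is_KsFGL p s F).
Local Notation q := (p ^ (s - 1))%N.
Local Notation N := (p ^ (2 * (s - 1)))%N.

Lemma main_ind t : forall i j, (i < N)%N -> (i + j = t)%N -> pin p 1 (F i j - rhs p s i j).
Proof.
elim/ltn_ind: t => t IH i j hi hij.
case: t IH hij => [|t] IH hij.
  have [-> ->] : i = 0%N /\ j = 0%N by lia.
  by rewrite hF.1 (rhs00 hp hs) subrr; apply: pin0.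
set n := t.+2.
have hin : (i < n)%N by lia.
have hjn : (j < n)%N by lia.
set A := T n F.
set D := T n (fun a b => if (a + b < t.+1)%N then F a b - rhs p s a b else 0).
set B := Gp p s + D.
have hD : good p N 1 D.
  move=> a b ha; rewrite /D coefT.
  case: ifP => _; last exact: pin0.
  case: ifP => hab; last exact: pin0.
  by apply: (IH (a + b)%N).
have hA1 : lowvan 1 A by apply: lowvan1_00; rewrite /A coefT /= hF.1.
have hB1 : lowvan 1 B.
  apply: lowvan1_00; rewrite /B (coefD (Gp p s) D 0) (coefD ((Gp p s)`_0)) (Gp00 hp hs) /D coefT /= hF.1 (rhs00 hp hs).
  by rewrite subr0 addr0.
have hAB : lowvan t.+1 (A - B).
  move=> a b hab; rewrite (coefB A B a) (coefB (A`_a)) /B (coefD (Gp p s) D a) (coefD ((Gp p s)`_a)) coef_Gp /A /D !coefT.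
  have -> : ((a < n) && (b < n))%N = true by apply/andP; split; lia.
  by rewrite hab; ring.
have hlog := hF.2 i j.
rewrite (log_T _ _ _ hin hjn) (log_T _ _ _ hin hjn) (log_T _ _ _ hin hjn) T_X // T_Y // in hlog.
set c := fun k => (logcoef p s k)%:P%:P : P3.
set Phi := \sum_(k < t.+2) c k * (A ^+ (p ^ (k * s)) - xx ^+ (p ^ (k * s)) - yy ^+ (p ^ (k * s))).
have hPhi : Phi`_i`_j = 0.
  rewrite /Phi !coef_sum.
  under eq_bigr do rewrite /c coefCM2 !coefB mulrBr mulrBr.
  rewrite !sumrB -hij hlog; ring.
set Psi0 := \sum_(k < t.+1) c k.+1 * (A ^+ (p ^ (k.+1 * s)) - B ^+ (p ^ (k.+1 * s))).
set Psi := \sum_(k < t.+1) c k.+1 * (B ^+ (p ^ (k.+1 * s)) - Gp p s ^+ (p ^ (k.+1 * s))).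
set Th := \sum_(k < t.+1) c k.+1 * (Gp p s ^+ (p ^ (k.+1 * s)) - xx ^+ (p ^ (k.+1 * s)) - yy ^+ (p ^ (k.+1 * s))) - vv * Cp p s.
have hdec : A - Gp p s = Phi - Psi0 - (Psi + Th).
  rewrite /Phi big_ord_recl /c /=.
  have hb : forall k, bump 0 k = k.+1 by move=> k; rewrite /bump leq0n.
  under eq_bigr do rewrite hb.
  rewrite logcoef0 mul0n expn0 !expr1 !rmorph1 mul1r /Th /Gp.
  have -> : \sum_(i < t.+1) (logcoef p s i.+1)%:P%:P *
     (A ^+ (p ^ (i.+1 * s)) - xx ^+ (p ^ (i.+1 * s)) - yy ^+ (p ^ (i.+1 * s))) =
     Psi0 + Psi + \sum_(k < t.+1) c k.+1 * (Gp p s ^+ (p ^ (k.+1 * s)) - xx ^+ (p ^ (k.+1 * s)) - yy ^+ (p ^ (k.+1 * s))).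
    rewrite /Psi0 /Psi -!big_split; apply: eq_bigr => k _ /=; rewrite /c; ring.
  ring.
have hPsi0 : Psi0`_i`_j = 0.
  apply: (lowvan_sum (d := t.+2)) => [k _|]; last by lia.
  move=> a b hab; rewrite /c coefCM2.
  rewrite (@pow_lowvan t.+1 A B) ?mulr0 //.
  by rewrite -{1}(expn0 p) ltn_exp2l ?prime_gt1 // muln_gt0 ltn0Sn; lia.
have hgood : good p N 1 (Psi + Th).
  apply: (good_add hp); last exact: (Theta hp hs).
  apply: (good_sum hp) => k _; apply: (@good_logcoef p N hp s 1 k.+1).
  apply: (@good_weak p N (1 + k.+1 * s)); first by nia.
  by apply: (good_pow hp) => //; apply: good_Gp.
have := hgood i j hi.
have -> : F i j - rhs p s i j = (A - Gp p s)`_i`_j.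
  by rewrite (coefB A _ i) coefB coef_Gp /A coefT hin hjn.
rewrite hdec !coefB hPhi hPsi0 subr0 sub0r.
by move=> h; apply: pin_opp.
Qed.
End Main.

Definition corr p s (G : ps2) i j :=
  \sum_(k < i + j) logcoef p s k.+1 * ps2_exp G (p ^ (k.+1 * s)) i j.

Lemma log_split p s G i j : log_of p s G i j = G i j + corr p s G i j.
Proof.
rewrite (log_T p s G (n := (i + j).+1)) ?ltnS ?leq_addr ?leq_addl //.
rewrite big_ord_recl /= logcoef0 mul0n expn0 expr1 mul1r coefT ltnS leq_addr ltnS leq_addl /=.
congr (_ + _); apply: eq_bigr => k _.
rewrite (exp_T _ _ (n := (i + j).+1)) ?ltnS ?leq_addr ?leq_addl //.
Qed.

Definition RHSL p s : ps2 := fun i j => log_of p s ps2_X i j + log_of p s ps2_Y i j.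

Fixpoint Fn p s t : ps2 :=
  match t with
  | 0 => fun i j => if (i + j == 0)%N then RHSL p s i j else 0
  | t'.+1 => fun i j => if (i + j == t'.+1)%N then RHSL p s i j - corr p s (Fn p s t') i j
                         else Fn p s t' i j
  end.

Definition F0 p s : ps2 := fun i j => Fn p s (i + j) i j.

Lemma Fn_stable p s t i j : (i + j <= t)%N -> Fn p s t i j = F0 p s i j.
Proof.
elim: t => [|t IH] h.
  by rewrite /F0 (_ : (i + j = 0)%N) //; lia.
have [e|ne] := eqVneq (i + j)%N t.+1; first by rewrite /F0 e.
rewrite /= (negbTE ne); apply: IH; lia.
Qed.

Lemma RHSL00 p s : RHSL p s 0 0 = 0.
Proof.
rewrite /RHSL !log_split /corr !big_ord0 !addr0 /ps2_X /ps2_Y /=; by [].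
Qed.

Lemma F000 p s : F0 p s 0 0 = 0.
Proof. by rewrite /F0 /= RHSL00. Qed.

Lemma F0_KsFGL p s : prime p -> (0 < s)%N -> is_KsFGL p s (F0 p s).
Proof.
move=> hp hs; split; first exact: F000.
move=> i j; rewrite log_split -/(RHSL p s i j).
case E : (i + j)%N => [|t].
  by rewrite /corr E big_ord0 addr0 /F0 E /= E.
rewrite {1}/F0 E /= E eqxx -addrA -[RHS]addr0; congr (RHSL p s i j + _).
rewrite /corr E addrC -sumrB; apply: big1 => k _; rewrite -mulrBr.
set n := t.+2.
have hin : (i < n)%N by lia.
have hjn : (j < n)%N by lia.
rewrite (exp_T _ _ hin hjn) (exp_T _ _ hin hjn) -!coefB.
have hM : (1 < p ^ (k.+1 * s))%N.
  by rewrite -{1}(expn0 p) ltn_exp2l ?prime_gt1 // muln_gt0 ltn0Sn; lia.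
have h1 : lowvan 1 (T n (F0 p s)) by apply: lowvan1_00; rewrite coefT /= F000.
have h2 : lowvan 1 (T n (Fn p s t)) by apply: lowvan1_00; rewrite coefT /= Fn_stable // F000.
have h3 : lowvan t.+1 (T n (F0 p s) - T n (Fn p s t)).
  move=> a b hab; rewrite !coefB !coefT Fn_stable; last by lia.
  by rewrite subrr.
by rewrite (pow_lowvan h1 h2 h3 hM) ?mulr0 // E.
Qed.

Definition swap (A : ps2) : ps2 := fun i j => A j i.

Lemma mul_swap A B : ps2_mul (swap A) (swap B) = swap (ps2_mul A B).
Proof.
apply: functional_extensionality => i; apply: functional_extensionality => j.
by rewrite /swap /ps2_mul exchange_big.
Qed.

Lemma exp_swap A m : ps2_exp (swap A) m = swap (ps2_exp A m).
Proof.
elim: m => [|m IH].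
  apply: functional_extensionality => i; apply: functional_extensionality => j.
  by rewrite /swap /ps2_exp /= /ps2_one andbC.
by rewrite /ps2_exp !iterS -/(ps2_exp (swap A) m) -/(ps2_exp A m) IH mul_swap.
Qed.

Lemma log_swap p s A i j : log_of p s (swap A) i j = log_of p s A j i.
Proof.
rewrite /log_of addnC; apply: eq_bigr => k _; by rewrite exp_swap.
Qed.

Lemma swapX : swap ps2_X = ps2_Y.
Proof.
apply: functional_extensionality => i; apply: functional_extensionality => j.
by rewrite /swap /ps2_X /ps2_Y andbC.
Qed.

Lemma swapY : swap ps2_Y = ps2_X.
Proof.
apply: functional_extensionality => i; apply: functional_extensionality => j.
by rewrite /swap /ps2_X /ps2_Y andbC.
Qed.

Lemma swap_KsFGL p s F : is_KsFGL p s F -> is_KsFGL p s (swap F).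
Proof.
move=> [h0 hl]; split; first by [].
move=> i j; rewrite log_swap hl -(log_swap p s ps2_X i j) -(log_swap p s ps2_Y i j).
by rewrite swapX swapY addrC.
Qed.

Lemma rhs_sym p s i j : (0 < p)%N -> rhs p s j i = rhs p s i j.
Proof.
move=> hp0; rewrite /rhs.
have e1 : ps2_X j i = ps2_Y i j by rewrite /ps2_X /ps2_Y andbC.
have e2 : ps2_Y j i = ps2_X i j by rewrite /ps2_X /ps2_Y andbC.
set q := (p ^ (s - 1))%N.
have hsum : \sum_(1 <= l < p) ('C(p, l)%:R / p%:R : rat)%:P * ((j == q * l)%N && (i == q * (p - l))%N)%:R =
            \sum_(1 <= l < p) ('C(p, l)%:R / p%:R : rat)%:P * ((i == q * l)%N && (j == q * (p - l))%N)%:R.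
  rewrite big_nat_rev; apply: eq_big_nat => l /andP[h1 h2].
  have -> : (1 + p - l.+1 = p - l)%N by lia.
  have -> : (p - (p - l) = l)%N by lia.
  rewrite bin_sub; last by lia.
  by rewrite andbC.
by rewrite e1 e2 hsum [ps2_Y i j + _]addrC.
Qed.


Theorem proposition3p2 (p s : nat) (hp : prime p) (hs : (1 < s)%N) :
  (exists F : ps2, is_KsFGL p s F) /\
  forall F : ps2, is_KsFGL p s F ->
    (forall i j : nat, (i < p ^ (2 * (s - 1)))%N -> cong_mod_p p (F i j) (rhs p s i j)) /\
    (forall i j : nat, (j < p ^ (2 * (s - 1)))%N -> cong_mod_p p (F i j) (rhs p s i j)).
Proof.
split; first by exists (F0 p s); apply: F0_KsFGL => //; lia.
move=> F hF; split => i j hi n; apply: (inP_in_pZp hp).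
  by have := @main_ind p s hp hs F hF (i + j)%N i j hi (erefl _); move/(_ n).
have := @main_ind p s hp hs (swap F) (swap_KsFGL hF) (j + i)%N j i hi (erefl _).
by rewrite rhs_sym ?prime_gt0 //; move/(_ n).
Qed.
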